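(* Let $\mathcal{T}$ be a teacher class over $\mathcal{X},\mathcal{Y},\Phi$ and let $H\subseteq\mathcal{X}\times\mathcal{Y}$ be a non-empty history that is consistent with $\mathcal{T}$. Then \[\min_{\mathcal{A}} M(\mathcal{A},\mathcal{T},H)=\mathrm{DFFdim}(\mathcal{T},H),\] where the minimum is over all deterministic DFF algorithms $\mathcal{A}$.
   Context: Setting. $\mathcal{X}$ is a set of examples, $\mathcal{Y}$ a finite set of labels, and $\Phi$ a set of Boolean features $\phi:\mathcal{X}\to\{0,1\}$; $\bot$ denotes a null symbol not in $\mathcal{X}\cup\mathcal{Y}\cup\Phi$. A teacher over $\mathcal{X},\mathcal{Y},\Phi$ is a pair $T=(\ell,\psi)$ with $\ell:\mathcal{X}\to\mathcal{Y}$ and $\psi:\mathcal{X}\times\mathcal{X}\to\Phi\cup\{\bot\}$ such that whenever $\ell(x)\neq\ell(\hat x)$, $\phi:=\psi(x,\hat x)\in\Phi$, $\phi(x)=1$ and $\phi(\hat x)=0$. A teacher class is a set of teachers. A history is a non-empty set $H\subseteq\mathcal{X}\times\mathcal{Y}$; a teacher $(\ell,\psi)$ is consistent with $H$ if $\ell(x)=y$ for all $(x,y)\in H$; $\mathcal{T}_H$ is the set of teachers in $\mathcal{T}$ consistent with $H$, and $\mathcal{T}$ is consistent with $H$ if $\mathcal{T}_H\neq\emptyset$. DFF protocol. A DFF algorithm is given $H$ in advance. In each round $t=1,2,\dots$: an example $x_t\in\mathcal{X}$ arrives; the algorithm outputs a predicted label $\hat y_t$ and an explanation $\hat x_t$,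 where $(\hat x_t,\hat y_t)$ must belong to $H\cup\{(x_s,y_s):s<t\}$; if $\hat y_t=y_t$ (the true label of $x_t$) the algorithm learns only that it was correct; otherwise (a mistake) it receives $y_t$ and a feature $\phi_t\in\Phi$. The feedback of round $t$ is consistent with a teacher $(\ell,\psi)$ if $y_t=\ell(x_t)$ and, when $\hat y_t\neq y_t$, $\phi_t=\psi(x_t,\hat x_t)$. $M(\mathcal{A},\mathcal{T},H)$ denotes the supremum, over all finite example sequences and all teachers $T\in\mathcal{T}_H$, of the number of mistakes of $\mathcal{A}$ when all feedback is consistent with $T$. DFF dimension. A DFF tree is a rooted tree whose nodes are triples $\langle y,\phi,x\rangle$ with $y\in\mathcal{Y}\cup\{\bot\}$, $\phi\in\Phi\cup\{\bot\}$, $x\in\mathcal{X}\cup\{\bot\}$, such that the root has $y=\phi=\bot$, a node has $x=\bot$ iff it is a leaf, every edge is labeled by a pair $(\hat x,\hat y)\in\mathcal{X}\times\mathcal{Y}$, and every non-root node $\langle y,\phi,x\rangle$ with incoming edge $(\hat x,\hat y)$ has $\phi\neq\bot$ whenever $y\neq\hat y$. For a parent–child pair $\langle\cdot,\cdot,x\rangle\xrightarrow{(\hat x,\hat y)}\langle y,\phi,\cdot\rangle$ on a path, $(x,y)$ is called a labeled example in that path. A path from the root is consistent with a teacher $(\ell,\psi)$ if for every such parent–child pair on it, $\ell(x)=y$ and, if $y\neq\hat y$, $\psi(x,\hat x)=\phi$. Given $\mathcal{T}$ consistent with $H$, a DFF tree is shattered by $\mathcal{T}$ and $H$ if: (1)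 every non-root node $\langle y,\phi,x\rangle$ with incoming edge $(\hat x,\hat y)$ has $y\neq\hat y$; (2) the labels of the outgoing edges of each non-leaf node $v$ are exactly the pairs that belong to $H$ or are labeled examples in the path from the root to $v$; (3) every root-to-leaf path is consistent with some teacher in $\mathcal{T}_H$; (4) all root-to-leaf paths have the same number of edges, called the height. $\mathrm{DFFdim}(\mathcal{T},H)$ is the maximal height of a DFF tree shattered by $\mathcal{T}$ and $H$. *)

(* Defs.v *)
From mathcomp Require Import all_boot.
From Stdlib Require Import ClassicalEpsilon.

Set Implicit Arguments.
Unset Strict Implicit.
Unset Printing Implicit Defensive.

Section DFF.

Variables (X : Type) (Y : finType) (Phi : (X -> bool) -> Prop).

(** Features are Boolean functions on X; the null symbol ⊥ is [None]. *)
Definition feat := X -> bool.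

Record teacher := Teacher {
  lab : X -> Y;
  expl : X -> X -> option feat
}.

Definition is_teacher (T : teacher) : Prop :=
  forall x xh, lab T x <> lab T xh ->
    exists phi, expl T x xh = Some phi /\ Phi phi /\ phi x = true /\ phi xh = false.

Definition teacher_class (TC : teacher -> Prop) : Prop :=
  forall T, TC T -> is_teacher T.

Definition consistent (T : teacher) (H : X * Y -> Prop) : Prop :=
  forall p, H p -> lab T p.1 = p.2.

Definition TH (TC : teacher -> Prop) (H : X * Y -> Prop) (T : teacher) : Prop :=
  TC T /\ consistent T H.

(** ** Extended naturals (None = +oo) and suprema of sets of naturals *)
Definition enat := option nat.

Definition ele (a b : enat) : Prop :=
  match a, b with
  | _, None => True
  | None, Some _ => False
  | Some m, Some n => m <= n
  end.

Definition is_esup (S : nat -> Prop) (e : enat) : Prop :=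
  match e with
  | Some n => (forall m, S m -> m <= n) /\
              (forall k, (forall m, S m -> m <= k) -> n <= k)
  | None => forall k, exists m, S m /\ k < m
  end.

Definition esup (S : nat -> Prop) : enat :=
  epsilon (inhabits None) (is_esup S).

(** Feedback of a round: [None] = "correct";
    [Some (y, phi)] = mistake, with true label y and feature phi. *)
Definition feedback := option (Y * option feat).

Definition interaction := seq (X * feedback).

(** A deterministic DFF algorithm maps the past interaction and the current
    example x_t to its output (explanation x̂_t, predicted label ŷ_t). *)
Definition dff_alg := interaction -> X -> X * Y.

Fixpoint revealed (A : dff_alg) (pre rest : interaction) : seq (X * Y) :=
  match rest with
  | [::] => [::]
  | (x, fb) :: r =>
      (x, match fb with Some (y, _) => y | None => (A pre x).2 end)
        :: revealed A (rcons pre (x, fb)) r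
  end.

Fixpoint protocol_hist (A : dff_alg) (pre rest : interaction) : Prop :=
  match rest with
  | [::] => True
  | (x, fb) :: r =>
      match fb with
      | None => True
      | Some (y, f) => y != (A pre x).2 /\ exists phi, f = Some phi /\ Phi phi
      end /\ protocol_hist A (rcons pre (x, fb)) r
  end.

Definition valid_alg (H : X * Y -> Prop) (A : dff_alg) : Prop :=
  forall (h : interaction) (x : X), protocol_hist A [::] h ->
    H (A h x) \/ List.In (A h x) (revealed A [::] h).

(** Number of mistakes of A on the example sequence xs when all feedback is
    consistent with teacher T (the run is then fully determined). *)
Fixpoint mistakes (A : dff_alg) (T : teacher) (pre : interaction) (xs : seq X)
  : nat :=
  match xs with
  | [::] => 0
  | x :: r =>
      let o := A pre x in
      let y := lab T x in
      if o.2 == y then mistakes A T (rcons pre (x, None)) r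
      else (mistakes A T (rcons pre (x, Some (y, expl T x o.1))) r).+1
  end.

Definition Mbound (A : dff_alg) (TC : teacher -> Prop) (H : X * Y -> Prop)
  : enat :=
  esup (fun m => exists T, TH TC H T /\ exists xs, mistakes A T [::] xs = m).

(** A node is a triple <y, phi, x>; x = ⊥ iff the node is a leaf.  The
    outgoing edges of an internal node are indexed by their labels (x̂, ŷ);
    only the children at the labels allowed by condition (2) are part of
    the tree (the others are ignored). *)
Inductive dfftree : Type :=
  | DLeaf : option Y -> option feat -> dfftree
  | DNode : option Y -> option feat -> X -> (X -> Y -> dfftree) -> dfftree.

Definition ty (t : dfftree) : option Y :=
  match t with DLeaf y _ => y | DNode y _ _ _ => y end.
Definition tphi (t : dfftree) : option feat :=
  match t with DLeaf _ f => f | DNode _ f _ _ => f end.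

Definition in_Phi_or_bot (f : option feat) : Prop :=
  match f with None => True | Some phi => Phi phi end.

(** A parent–child pair <_,_,x> --(x̂,ŷ)--> <y,phi,_> on a path. *)
Record edge_info := EdgeInfo {
  e_x : X; e_xh : X; e_yh : Y; e_y : option Y; e_phi : option feat }.

Definition path_consistent (T : teacher) (C : seq edge_info) : Prop :=
  forall c, List.In c C ->
    Some (lab T (e_x c)) = e_y c /\
    (e_y c <> Some (e_yh c) -> expl T (e_x c) (e_xh c) = e_phi c).

(** [shat TC H t L C d]: the subtree t (reached by a path whose labeled
    examples are L and whose parent–child pairs are C) satisfies conditions
    (1)–(4) with all its root-to-leaf paths having exactly d more edges. *)
Fixpoint shat (TC : teacher -> Prop) (H : X * Y -> Prop) (t : dfftree)
    (L : seq (X * Y)) (C : seq edge_info) (d : nat) : Prop :=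
  match t, d with
  | DLeaf _ _, 0 => exists T, TH TC H T /\ path_consistent T C
  | DNode _ _ x ch, d'.+1 =>
      forall xh yh, (H (xh, yh) \/ List.In (xh, yh) L) ->
        let c := ch xh yh in
        in_Phi_or_bot (tphi c) /\
        (ty c <> Some yh -> tphi c <> None) /\
        ty c <> Some yh /\
        shat TC H c
          (L ++ match ty c with Some y => [:: (x, y)] | None => [::] end)
          (rcons C (EdgeInfo x xh yh (ty c) (tphi c))) d'
  | _, _ => False
  end.

Definition shattered (TC : teacher -> Prop) (H : X * Y -> Prop) (t : dfftree)
    (d : nat) : Prop :=
  ty t = None /\ tphi t = None /\ shat TC H t [::] [::] d.

Definition DFFdim (TC : teacher -> Prop) (H : X * Y -> Prop) : enat :=
  esup (fun d => exists t, shattered TC H t d).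

End DFF.

(* Main.v *)
Require Import Defs.
From mathcomp Require Import all_boot.
From Stdlib Require Import ClassicalEpsilon Classical.

Set Implicit Arguments.
Unset Strict Implicit.
Unset Printing Implicit Defensive.

Lemma least_bound (S : nat -> Prop) k : (forall m, S m -> m <= k) ->
  exists n, (forall m, S m -> m <= n) /\ (forall j, (forall m, S m -> m <= j) -> n <= j).
Proof.
move=> hk.
suff: forall n, n <= k -> (forall m, S m -> m <= n) -> exists n0, (forall m, S m -> m <= n0) /\ (forall j, (forall m, S m -> m <= j) -> n0 <= j) by apply; [exact: leqnn|exact: hk].
elim: k {hk} => [|k IH] n hn hb.
  exists n; split => // z _; move: hn; rewrite leqn0 => /eqP ->; done.
case: (classic (exists z, (forall m, S m -> m <= z) /\ z < n)).
  move=> [z [hz hzn]]; apply: (IH z) => //; rewrite -ltnS; exact: leq_trans hzn hn.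
move=> hn'; exists n; split => // z hz; rewrite leqNgt; apply/negP => hzn.
by apply: hn'; exists z.
Qed.

Lemma esup_spec (S : nat -> Prop) : is_esup S (esup S).
Proof.
rewrite /esup; apply: epsilon_spec.
case: (classic (exists k, forall m, S m -> m <= k)).
  by move=> [k hk]; have [n hn] := least_bound hk; exists (Some n).
move=> hn; exists None => k; apply: NNPP => hk; apply: hn; exists k => m hm.
rewrite leqNgt; apply/negP => hkm; apply: hk; by exists m.
Qed.

Lemma esup_sub (D M : nat -> Prop) : (forall d, D d -> M d) -> ele (esup D) (esup M).
Proof.
move=> hDM; have hD := esup_spec D; have hM := esup_spec M.
case: (esup D) hD => [n|]; case: (esup M) hM => [m|] //=.
- by move=> [hm _] [_ hn]; apply: hn => d /hDM /hm.
- by move=> [hm _] hD; have [d [hd hmd]] := hD m; move: (hm _ (hDM _ hd)); rewrite leqNgt hmd.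
Qed.

Lemma max_exists (S : nat -> Prop) k : S 0 -> (forall d, S d -> d <= k) ->
  exists K, S K /\ forall d, S d -> d <= K.
Proof.
move=> h0; elim: k => [|k IH] hb.
  by exists 0; split => // d /hb.
case: (classic (S k.+1)) => hk; first by exists k.+1.
apply: IH => d hd; have := hb d hd; rewrite leq_eqVlt ltnS => /orP [/eqP hdk|] //.
by rewrite hdk in hd.
Qed.

Section Trees.
Variables (X : Type) (Y : finType) (Phi : (X -> bool) -> Prop) (H : X * Y -> Prop).
Variable p0 : X * Y.
Hypothesis Hp0 : H p0.

Lemma pc_rcons (T : teacher X Y) C e :
  path_consistent T (rcons C e) <-> path_consistent T C /\ path_consistent T [:: e].
Proof.
rewrite /path_consistent -cats1; split.
  move=> h; split => c hc; apply: h; apply/List.in_app_iff; by [left|right].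
move=> [h1 h2] c /List.in_app_iff [] hc; by [apply: h1|apply: h2].
Qed.

Lemma shat_ex V : forall d t L C, shat Phi V H t L C d ->
  exists T, TH V H T /\ path_consistent T C.
Proof.
elim => [|d IH] [y f|y f x ch] L C //=.
case: p0 Hp0 => xh yh hp h.
have [_ [_ [_ hs]]] := h xh yh (or_introl hp).
have [T [hT hpc]] := IH _ _ _ hs.
by exists T; split => //; move/pc_rcons: hpc => [].
Qed.

Lemma shat_mono V1 V2 : forall d t L1 L2 C1 C2,
  (forall p, List.In p L2 -> List.In p L1) ->
  (forall T, TH V1 H T -> path_consistent T C1 -> TH V2 H T /\ path_consistent T C2) ->
  shat Phi V1 H t L1 C1 d -> shat Phi V2 H t L2 C2 d.
Proof.
elim => [|d IH] [y f|y f x ch] L1 L2 C1 C2 hL hC //=.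
  move=> [T [hT hpc]]; have [h1 h2] := hC T hT hpc; by exists T.
move=> h xh yh hin.
have [h1 [h2 [h3 h4]]] := h xh yh (match hin with or_introl a => or_introl a | or_intror b => or_intror (hL _ b) end).
split => //; split => //; split => //.
apply: IH h4.
  by move=> p /List.in_app_iff [hp|hp]; apply/List.in_app_iff; [left; apply: hL|right].
move=> T hT /pc_rcons [hpc he]; have [h5 h6] := hC T hT hpc.
by split => //; apply/pc_rcons.
Qed.

Fixpoint trunc (n : nat) (t : dfftree X Y) : dfftree X Y :=
  match n with
  | 0 => DLeaf (ty t) (tphi t)
  | n'.+1 => match t with
             | DNode y f x ch => DNode y f x (fun a b => trunc n' (ch a b))
             | _ => t end
  end.

Lemma ty_trunc n t : ty (trunc n t) = ty t.
Proof. by case: n => [|n] //; case: t. Qed.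
Lemma tphi_trunc n t : tphi (trunc n t) = tphi t.
Proof. by case: n => [|n] //; case: t. Qed.

Lemma shat_trunc V : forall d t L C n, shat Phi V H t L C d -> n <= d ->
  shat Phi V H (trunc n t) L C n.
Proof.
elim => [|d IH] [y f|y f x ch] L C [|n] //=.
  move=> h _; exact: (@shat_ex V d.+1 (DNode y f x ch) L C h).
move=> h hn xh yh hin; have [h1 [h2 [h3 h4]]] := h xh yh hin.
rewrite ty_trunc tphi_trunc; split => //; split => //; split => //.
exact: IH.
Qed.

Definition setroot (y : option Y) (f : option (feat X)) (t : dfftree X Y) :=
  match t with DLeaf _ _ => DLeaf y f | DNode _ _ x ch => DNode y f x ch end.

Lemma shat_setroot V y f t L C d :
  shat Phi V H (setroot y f t) L C d <-> shat Phi V H t L C d.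
Proof. by case: t => [? ?|? ? ? ?]; case: d. Qed.

End Trees.

Section Lower.
Variables (X : Type) (Y : finType) (Phi : (X -> bool) -> Prop) (TC : teacher X Y -> Prop) (H : X * Y -> Prop).
Variable p0 : X * Y.
Hypothesis Hp0 : H p0.
Variable A : dff_alg X Y.

Lemma revealed_rcons h : forall pre x fb,
  revealed A pre (rcons h (x, fb)) =
  rcons (revealed A pre h) (x, match fb with Some (y, _) => y | None => (A (pre ++ h) x).2 end).
Proof.
elim: h => [|[x0 fb0] r IH] pre x fb /=; first by rewrite cats0.
by rewrite IH cat_rcons.
Qed.

Lemma ph_rcons h : forall pre x fb,
  protocol_hist Phi A pre (rcons h (x, fb)) <->
  protocol_hist Phi A pre h /\
  match fb with
  | None => True
  | Some (y, f) => y != (A (pre ++ h) x).2 /\ exists phi, f = Some phi /\ Phi phi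
  end.
Proof.
elim: h => [|[x0 fb0] r IH] pre x fb /=.
  by rewrite cats0; split; [case|move=> [_ h]].
rewrite IH cat_rcons; tauto.
Qed.

Hypothesis hval : valid_alg Phi H A.

Lemma lower_run : forall d t L C pre, shat Phi TC H t L C d ->
  protocol_hist Phi A [::] pre ->
  (forall p, List.In p (revealed A [::] pre) -> List.In p L) ->
  exists T, TH TC H T /\ path_consistent T C /\ exists xs, mistakes A T pre xs = d.
Proof.
elim => [|d IH] [y f|y f x ch] L C pre //=.
  move=> [T [hT hpc]] _ _; exists T; split => //; split => //; by exists [::].
move=> h hph hrev.
case ho: (A pre x) => [xh yh].
have hin : H (xh, yh) \/ List.In (xh, yh) L.
  case: (hval x hph); rewrite ho; [by left|by move/hrev; right].
have [h1 [h2 [h3 h4]]] := h xh yh hin.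
move: h1 h2 h3 h4; case hty: (ty (ch xh yh)) => [yc|] h1 h2 h3 h4.
- case hf: (tphi (ch xh yh)) => [phi|]; last by case: (h2 h3 hf).
  rewrite hf /= in h1.
  have hyc : yc != yh by apply/eqP => e; apply: h3; rewrite e.
  have [T [hT [hpc [xs hxs]]]] := IH _ _ _ (rcons pre (x, Some (yc, Some phi))) h4
    ltac:(apply/ph_rcons; split => //; rewrite cat0s ho; split => //; by exists phi)
    ltac:(move=> p; rewrite revealed_rcons -cats1 => /List.in_app_iff [hp|hp];
          apply/List.in_app_iff; [left; exact: hrev|right; exact hp]).
  move/pc_rcons: hpc => [hpc he].
  have [he1 he2] := he _ (or_introl erefl).
  move: he1 he2 => /= [hl] he2.
  have hexp := he2 ltac:(by move=> [e]; move/eqP: hyc).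
  exists T; split => //; split => //; exists (x :: xs) => /=.
  rewrite ho /= hl hexp.
  have -> : (yh == yc) = false by rewrite eq_sym; apply/negbTE.
  by rewrite hf hxs.
- have [T [_ hpc]] := shat_ex Hp0 h4.
  move/pc_rcons: hpc => [_ he]; have [] := he _ (or_introl erefl); by [].
Qed.

End Lower.

Lemma lower_bound X (Y : finType) Phi (TC : teacher X Y -> Prop) H A :
  (exists p, H p) -> valid_alg Phi H A -> ele (DFFdim Phi TC H) (Mbound A TC H).
Proof.
move=> [p0 Hp0] hval; apply: esup_sub => d [t [_ [_ hs]]].
have [T [hT [_ [xs hxs]]]] := lower_run Hp0 hval hs (pre := [::]) I (fun p (q : List.In p [::]) => match q with end).
by exists T; split => //; exists xs.
Qed.

Section Upper.
Variables (X : Type) (Y : finType) (Phi : (X -> bool) -> Prop) (TC : teacher X Y -> Prop) (H : X * Y -> Prop).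
Hypothesis hTC : teacher_class Phi TC.
Variable p0 : X * Y.
Hypothesis Hp0 : H p0.

Definition Sd (V : teacher X Y -> Prop) (L : seq (X * Y)) (d : nat) :=
  exists t, shat Phi V H t L [::] d.
Definition Bd V L k := forall d, Sd V L d -> d <= k.
Definition restr (V : teacher X Y -> Prop) x y xh f : teacher X Y -> Prop :=
  fun T => V T /\ lab T x = y /\ expl T x xh = f.
Definition good V L x (o : X * Y) := forall y phi, y <> o.2 -> Phi phi ->
  forall d, Sd (restr V x y o.1 (Some phi)) (L ++ [:: (x, y)]) d ->
  exists d', Sd V L d' /\ d < d'.
Definition state := ((teacher X Y -> Prop) * seq (X * Y))%type.
Definition cq (st : state) (x : X) (o : X * Y) : Prop := (H o \/ List.In o st.2) /\
    ((exists o', (H o' \/ List.In o' st.2) /\ good st.1 st.2 x o') -> good st.1 st.2 x o).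
Definition choose (st : state) (x : X) : X * Y := epsilon (inhabits p0) (cq st x).

Lemma choose_spec st x : (H (choose st x) \/ List.In (choose st x) st.2) /\
    ((exists o', (H o' \/ List.In o' st.2) /\ good st.1 st.2 x o') -> good st.1 st.2 x (choose st x)).
Proof.
suff : cq st x (choose st x) by [].
rewrite /choose; apply: epsilon_spec.
case: (classic (exists o', (H o' \/ List.In o' st.2) /\ good st.1 st.2 x o')).
  move=> [o [h1 h2]]; exists o; split => // _.
move=> hn; exists p0; split; [by left|by move=> /hn].
Qed.

Definition step (st : state) (e : X * feedback X Y) : state :=
  let: (x, fb) := e in
  let o := choose st x in
  match fb with
  | None => ((fun T => st.1 T /\ lab T x = o.2), st.2 ++ [:: (x, o.2)])
  | Some (y, f) => (restr st.1 x y o.1 f, st.2 ++ [:: (x, y)])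
  end.
Definition stateof (h : interaction X Y) : state := foldl step (TC, [::]) h.
Definition Astar : dff_alg X Y := fun h x => choose (stateof h) x.

Lemma stateof_rcons h e : stateof (rcons h e) = step (stateof h) e.
Proof. by rewrite /stateof -cats1 foldl_cat. Qed.

Lemma stateof_revealed h : forall pre,
  (stateof (pre ++ h)).2 = (stateof pre).2 ++ revealed Astar pre h.
Proof.
elim: h => [|[x fb] r IH] pre /=; first by rewrite !cats0.
rewrite -cat_rcons IH stateof_rcons /=.
by case: fb => [[y f]|] /=; rewrite -catA.
Qed.

Lemma Astar_valid : valid_alg Phi H Astar.
Proof.
move=> h x _; have [hc _] := choose_spec (stateof h) x.
case: hc => hc; [by left|right].
by move: hc; rewrite -[h]cat0s stateof_revealed /=.
Qed.

Lemma not_good V L x o : ~ good V L x o ->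
  exists y phi d, y <> o.2 /\ Phi phi /\ Sd (restr V x y o.1 (Some phi)) (L ++ [:: (x, y)]) d /\
    ~ exists d', Sd V L d' /\ d < d'.
Proof.
move=> ng; apply: NNPP => nex; apply: ng => y phi hy hphi d hS.
apply: NNPP => nd; apply: nex; by exists y, phi, d.
Qed.

Lemma build_node V L x K (ch : X -> Y -> dfftree X Y) :
  (forall xh yh, H (xh, yh) \/ List.In (xh, yh) L ->
     exists y phi, ty (ch xh yh) = Some y /\ tphi (ch xh yh) = Some phi /\ y <> yh /\ Phi phi /\
       shat Phi V H (ch xh yh) (L ++ [:: (x, y)])
         [:: EdgeInfo x xh yh (Some y) (Some phi)] K) ->
  shat Phi V H (DNode None None x ch) L [::] K.+1.
Proof.
move=> hch /= xh yh hin.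
have [y [phi [hty [hphi [hy [hP hs]]]]]] := hch xh yh hin.
rewrite hty hphi /=; split => //; split => //; split => //.
by move=> [e]; apply: hy.
Qed.

Lemma good_exists V L x k T : TH V H T -> Bd V L k ->
  exists o, (H o \/ List.In o L) /\ good V L x o.
Proof.
move=> hT hB.
have h0 : Sd V L 0 by exists (DLeaf None None); exists T.
have [K [hK hKmax]] := max_exists h0 hB.
apply: NNPP => nex.
pose P xh yh c := exists y phi, ty c = Some y /\ tphi c = Some phi /\ y <> yh /\ Phi phi /\
       shat Phi V H c (L ++ [:: (x, y)]) [:: EdgeInfo x xh yh (Some y) (Some phi)] K.
have hP : forall xh yh, H (xh, yh) \/ List.In (xh, yh) L -> exists c, P xh yh c.
  move=> xh yh hin.
  have ng : ~ good V L x (xh, yh) by move=> g; apply: nex; exists (xh, yh).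
  have [y [phi [d [hy [hphi [[t ht] hnd]]]]]] := not_good ng.
  simpl in hy, ht.
  have hKd : K <= d.
    rewrite leqNgt; apply/negP => hdK; apply: hnd; by exists K.
  exists (setroot (Some y) (Some phi) (trunc K t)), y, phi.
  split; first by case: (trunc K t).
  split; first by case: (trunc K t).
  split => //; split => //.
  apply/shat_setroot.
  apply: (shat_mono (V1 := restr V x y xh (Some phi)) (L1 := L ++ [:: (x, y)]) (C1 := [::])) => //.
    move=> T' [[hV [hl he]] hc] _; split => //.
    move=> c [<-|[]] /=; split; [by rewrite hl|by move=> _; rewrite he].
  exact: (@shat_trunc X Y Phi H p0 Hp0 _ d t _ _ K ht hKd).
pose ch xh yh := epsilon (inhabits (DLeaf None None)) (P xh yh).
have hch : forall xh yh, H (xh, yh) \/ List.In (xh, yh) L -> P xh yh (ch xh yh).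
  move=> xh yh hin; apply: epsilon_spec; exact: hP.
have := hKmax K.+1 (ex_intro _ (DNode None None x ch) (build_node hch)).
by rewrite ltnn.
Qed.

Lemma upper_run T : TH TC H T -> forall xs pre k,
  (stateof pre).1 T -> (forall p, List.In p (stateof pre).2 -> lab T p.1 = p.2) ->
  Bd (stateof pre).1 (stateof pre).2 k -> mistakes Astar T pre xs <= k.
Proof.
move=> [hTC' hTH]; elim => [|x xs IH] pre k hV hL hB //=.
have hTV : TH (stateof pre).1 H T by [].
have [hcin hcg] := choose_spec (stateof pre) x.
rewrite /Astar.
case ho: (choose (stateof pre) x) hcin hcg => [xh yh] hcin hcg /=.
case: eqP => hy.
- apply: IH; rewrite stateof_rcons /= ?ho /=.
  + by split.
  + move=> p /List.in_app_iff [hp|[<-|[]]]; [exact: hL|by rewrite hy].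
  + move=> d hd; apply: hB.
    move: hd => [t ht]; exists t.
    apply: (shat_mono (V1 := fun T => (stateof pre).1 T /\ lab T x = yh)
       (L1 := (stateof pre).2 ++ [:: (x, yh)]) (C1 := [::])) => //.
      by move=> p hp; apply/List.in_app_iff; left.
    by move=> T' [[h1 _] h2] _.
- have hgood := hcg (good_exists x hTV hB).
  have hlxh : lab T xh = yh.
    case: hcin => hin; [exact: (hTH _ hin)|exact: (hL _ hin)].
  have [phi [hexp [hphi _]]] : exists phi, expl T x xh = Some phi /\ Phi phi /\ true.
    have htt : is_teacher Phi T by apply: hTC.
    have [phi [e [hp [_ _]]]] := htt x xh ltac:(by rewrite hlxh => e; apply: hy).
    by exists phi.
  have hS0 : Sd (restr (stateof pre).1 x (lab T x) xh (Some phi)) ((stateof pre).2 ++ [:: (x, lab T x)]) 0.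
    exists (DLeaf None None); exists T; split => //.
  have [d' [hd' hlt]] := hgood (lab T x) phi (fun e => hy (esym e)) hphi 0 hS0.
  have hk := hB _ hd'.
  case: k hB hk => [|k] hB hk; first by move: (leq_trans hlt hk).
  rewrite ltnS; apply: IH; rewrite stateof_rcons /= ?ho /= ?hexp.
  + by [].
  + move=> p /List.in_app_iff [hp|[<-|[]]]; [exact: hL|by []].
  + move=> d hd; have [d'' [hd'' hlt']] := hgood (lab T x) phi (fun e => hy (esym e)) hphi d hd.
    by rewrite -ltnS; apply: leq_trans hlt' (hB _ hd'').
Qed.

End Upper.

Theorem theorem1 (X : Type) (Y : finType) (Phi : (X -> bool) -> Prop)
    (TC : teacher X Y -> Prop) (hTC : teacher_class Phi TC)
    (H : X * Y -> Prop) (hHne : exists p, H p)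
    (hcons : exists T, TH TC H T) :
  (exists A : dff_alg X Y, valid_alg Phi H A /\ Mbound A TC H = DFFdim Phi TC H) /\
  (forall A : dff_alg X Y, valid_alg Phi H A -> ele (DFFdim Phi TC H) (Mbound A TC H)).
Proof.
split; last by move=> A hA; exact: lower_bound.
have [p0 Hp0] := hHne.
have hval := @Astar_valid X Y Phi TC H p0 Hp0.
exists (Astar Phi TC H p0); split => //.
have hlow := lower_bound TC hHne hval.
have hsD : is_esup (fun d => exists t, shattered Phi TC H t d) (DFFdim Phi TC H) := esup_spec _.
have hsM : is_esup (fun m => exists T, TH TC H T /\ exists xs, mistakes (Astar Phi TC H p0) T [::] xs = m)
   (Mbound (Astar Phi TC H p0) TC H) := esup_spec _.
move: hlow hsD hsM.
case: (DFFdim Phi TC H) => [n|]; last by case: (Mbound _ TC H).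
move=> hnm [hDn _].
have hup : forall T xs, TH TC H T -> mistakes (Astar Phi TC H p0) T [::] xs <= n.
  move=> T xs hT; apply: (upper_run hTC Hp0 hT) => //=.
  - by case: hT.
  - move=> d [t ht]; apply: hDn; exists (setroot None None t).
    by split; [case: t {ht}|split; [case: t {ht}|apply/shat_setroot]].
move: hnm; case: (Mbound _ TC H) => [m|] //= hnm.
- move=> [_ hmin]; congr Some; apply/eqP; rewrite eqn_leq hnm andbT.
  apply: hmin => _ [T [hT [xs <-]]]; exact: hup.
- move=> hM; have [_ [[T [hT [xs <-]]] hlt]] := hM n.
  by move: (hup T xs hT); rewrite leqNgt hlt.
Qed.
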